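(* Let $A=(Q_A,\Sigma,\delta_A,q_A,F_A)$ and $B=(Q_B,\Sigma,\delta_B,q_B,F_B)$ be NFAs such that $L(A)\cap L(B)=\emptyset$. Then there is a pattern of $A$ and $B$ if and only if there is an infinite tower of prefixes between $L(A)$ and $L(B)$.
   Context: Here $q_A,q_B$ are the initial states and $F_A,F_B$ the accepting states. The product automaton $A\times B$ has state set $Q_A\times Q_B$, initial state $(q_A,q_B)$, and transitions $(p,q)\xrightarrow{a}(p',q')$ whenever $p'\in\delta_A(p,a)$ and $q'\in\delta_B(q,a)$. A tuple $(S,\sigma,\sigma_1,\sigma_2,\tau,\tau_1,\tau_2)$ is a pattern of $A$ and $B$ if $S$ is a strongly connected component of the transition graph of $A\times B$ containing at least one edge, $\sigma,\sigma_1,\sigma_2,\tau,\tau_1,\tau_2$ are states of $A\times B$ such that: $\sigma_1\in F_A\times Q_B$ and $\tau_1\in Q_A\times F_B$; $\sigma,\sigma_2,\tau,\tau_2$ belong to $S$; there is a string $x$ such that both $\sigma_1$ and $\sigma_2$ are reachable from $\sigma$ under $x$; there is a string $y$ such that both $\tau_1$ and $\tau_2$ are reachable from $\tau$ under $y$; and $S$ is reachable from the initial state $(q_A,q_B)$. A string $v$ is a prefix of $w$, written $v\le w$, if $w=vu$ for some $u$. An infinite tower of prefixes between $K$ and $L$ is an infinite sequence $(w_i)_{i\ge1}$ with $w_1\in K\cup L$ and, for all $i$, $w_i\le w_{i+1}$, $w_i\in K$ implies $w_{i+1}\in L$, and $w_i\in L$ implies $w_{i+1}\in K$. *)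

(* Defs.v *)
From mathcomp Require Import all_boot.
Set Implicit Arguments. Unset Strict Implicit. Unset Printing Implicit Defensive.

Record nfa (Sigma : finType) := NFA {
  state : finType;
  delta : state -> Sigma -> {set state};
  init : state;
  final : {set state}
}.

Section NFA.
Variable Sigma : finType.

Definition delta_star (A : nfa Sigma) (p : state A) (w : seq Sigma) : {set state A} :=
  foldl (fun (S : {set state A}) a => \bigcup_(q in S) delta q a) [set p] w.

Definition reach (A : nfa Sigma) (p q : state A) (w : seq Sigma) : bool :=
  q \in delta_star p w.

Definition accepts (A : nfa Sigma) (w : seq Sigma) : bool :=
  [exists q in delta_star (init A) w, q \in final A].

Definition prod_nfa (A B : nfa Sigma) : nfa Sigma :=
  @NFA Sigma (state A * state B)%type
    (fun pq a => setX (delta pq.1 a) (delta pq.2 a))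
    (init A, init B)
    (setX (final A) (final B)).

Definition trans_edge (A : nfa Sigma) : rel (state A) :=
  fun p q => [exists a, q \in delta p a].

Definition is_scc (A : nfa Sigma) (S : {set state A}) : Prop :=
  exists s, S = [set v | connect (@trans_edge A) s v && connect (@trans_edge A) v s].

Definition pattern (A B : nfa Sigma) (S : {set state (prod_nfa A B)})
    (sg sg1 sg2 ta ta1 ta2 : state (prod_nfa A B)) : Prop :=
  [/\ is_scc S,
      (exists u v, [/\ u \in S, v \in S & trans_edge u v]),
      sg1.1 \in final A /\ ta1.2 \in final B,
      [/\ sg \in S, sg2 \in S, ta \in S & ta2 \in S] &
      [/\ (exists x, reach sg sg1 x /\ reach sg sg2 x),
          (exists y, reach ta ta1 y /\ reach ta ta2 y) &
          (exists s, s \in S /\ connect (@trans_edge (prod_nfa A B)) (init (prod_nfa A B)) s)]].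

Definition has_pattern (A B : nfa Sigma) : Prop :=
  exists S sg sg1 sg2 ta ta1 ta2, @pattern A B S sg sg1 sg2 ta ta1 ta2.

(* infinite tower of prefixes between K and L (indexed from 0 instead of 1) *)
Definition infinite_tower (K L : pred (seq Sigma)) : Prop :=
  exists w : nat -> seq Sigma,
    (K (w 0) || L (w 0)) /\
    forall i, [/\ prefix (w i) (w i.+1),
                  K (w i) -> L (w i.+1) &
                  L (w i) -> K (w i.+1)].

End NFA.

(* Main.v *)
Require Import Defs.
From mathcomp Require Import all_boot.
From Stdlib Require Import Classical ClassicalEpsilon.
Set Implicit Arguments. Unset Strict Implicit. Unset Printing Implicit Defensive.

Section B.
Variable Sigma : finType.
Implicit Types (A B : nfa Sigma).

Lemma foldl_mem A (S : {set state A}) t x :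
  x \in foldl (fun (S : {set state A}) a => \bigcup_(q in S) delta q a) S t =
  [exists q in S, x \in foldl (fun (S : {set state A}) a => \bigcup_(q in S) delta q a) [set q] t].
Proof.
elim: t S => [|a t IH] S /=.
  apply/idP/existsP => [xS|[q /andP[qS]]]; first by exists x; rewrite xS set11.
  by rewrite in_set1 => /eqP ->.
rewrite IH; apply/existsP/existsP => [[q' /andP[/bigcupP[q qS q'd] H]]|[q /andP[qS]]].
  exists q; rewrite qS /= big_set1 IH; apply/existsP; exists q'; by rewrite q'd.
rewrite big_set1 IH => /existsP[q' /andP[q'd H]].
exists q'; rewrite H andbT; apply/bigcupP; by exists q.
Qed.

Lemma reach_nil A (p q : state A) : reach p q [::] = (q == p).
Proof. by rewrite /reach /delta_star /= in_set1. Qed.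

Lemma reach_cons A (p q : state A) a t :
  reach p q (a :: t) = [exists r, (r \in delta p a) && reach r q t].
Proof. by rewrite /reach /delta_star /= big_set1 foldl_mem. Qed.

Lemma reach_cat A (p q : state A) s t :
  reach p q (s ++ t) <-> exists r, reach p r s /\ reach r q t.
Proof.
elim: s p => [|a s IH] p /=.
  split=> [H|[r [H1 H2]]]; first by exists p; rewrite reach_nil.
  by move: H1; rewrite reach_nil => /eqP <-.
rewrite reach_cons; split.
  move=> /existsP[r /andP[rd /IH[r' [H1 H2]]]].
  exists r'; split=> //; rewrite reach_cons; apply/existsP; exists r; by rewrite rd.
move=> [r [/[dup] H0]]; rewrite reach_cons => /existsP[r1 /andP[r1d H1]] H2.
apply/existsP; exists r1; rewrite r1d /=; apply/IH; by exists r.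
Qed.

Lemma reach_trans A (p q r : state A) s t :
  reach p q s -> reach q r t -> reach p r (s ++ t).
Proof. by move=> H1 H2; apply/reach_cat; exists q. Qed.

Lemma reach_prod A B (p : state (prod_nfa A B)) (q : state (prod_nfa A B)) w :
  reach p q w = reach p.1 q.1 w && reach p.2 q.2 w.
Proof.
elim: w p => [|a t IH] p.
  by rewrite !reach_nil; case: p q => [? ?] [? ?]; rewrite xpair_eqE.
rewrite !reach_cons; apply/existsP/andP.
  move=> [[r1' r2'] /andP[/= rd]]; rewrite IH => /andP[H1 H2].
  move: rd; rewrite in_setX => /andP[r1 r2].
  split; apply/existsP; [exists r1'|exists r2']; by rewrite ?r1 ?r2.
move=> [/existsP[r1 /andP[r1d H1]] /existsP[r2 /andP[r2d H2]]].
exists (r1, r2); by rewrite /= in_setX r1d r2d IH H1 H2.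
Qed.

Lemma reach_connect A (p q : state A) w : reach p q w -> connect (@trans_edge _ A) p q.
Proof.
elim: w p => [|a t IH] p; first by rewrite reach_nil => /eqP ->.
rewrite reach_cons => /existsP[r /andP[rd H]].
apply: connect_trans (IH _ H); apply: connect1; apply/existsP; by exists a.
Qed.

Lemma connect_reach A (p q : state A) : connect (@trans_edge _ A) p q -> exists w, reach p q w.
Proof.
move=> /connectP[s]; elim: s p => [|r s IH] p /=.
  by move=> _ ->; exists [::]; rewrite reach_nil.
move=> /andP[/existsP[a ra] Hp] Hl; have [w Hw] := IH _ Hp Hl.
exists (a :: w); rewrite reach_cons; apply/existsP; exists r; by rewrite ra.
Qed.

Lemma accepts_reach A w : accepts A w <-> exists f, f \in final A /\ reach (init A) f w.
Proof.
split; first by move=> /existsP[f /andP[H1 H2]]; exists f.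
by move=> [f [H1 H2]]; apply/existsP; exists f; rewrite H1 andbT.
Qed.

End B.
Set Implicit Arguments. Unset Strict Implicit. Unset Printing Implicit Defensive.

Section F.
Variable Sigma : finType.
Variables A B : nfa Sigma.
Notation P := (prod_nfa A B).

Lemma reach_projA (p q : state P) w : reach p q w -> reach p.1 q.1 w.
Proof. by rewrite reach_prod => /andP[]. Qed.
Lemma reach_projB (p q : state P) w : reach p q w -> reach p.2 q.2 w.
Proof. by rewrite reach_prod => /andP[]. Qed.

Lemma pattern_tower :
  (forall w : seq Sigma, ~ (accepts A w /\ accepts B w)) ->
  has_pattern A B -> infinite_tower (accepts A) (accepts B).
Proof.
move=> dis [S [sg [sg1 [sg2 [ta [ta1 [ta2 [[s ->] _ [f1 f2] [sgS sg2S taS ta2S]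
   [[x [x1 x2]] [y [y1 y2]] [s0 [s0S cs0]]]]]]]]]]].
move: sgS sg2S taS ta2S s0S; rewrite !inE => /andP[ssg sgs] /andP[ssg2 sg2s]
  /andP[sta tas] /andP[sta2 ta2s] /andP[ss0 s0s].
have [z Hz] := connect_reach (connect_trans cs0 (connect_trans s0s ssg)).
have [p Hp] := connect_reach (connect_trans sg2s sta).
have [r Hr] := connect_reach (connect_trans ta2s ssg).
pose c := x ++ p ++ y ++ r.
have Hc : reach sg sg c.
  by apply: reach_trans x2 (reach_trans Hp (reach_trans y2 Hr)).
pose pw k := iter k (fun t => t ++ c) [::].
have Hpw k : reach sg sg (pw k).
  elim: k => [|k IH]; first by rewrite reach_nil.
  exact: reach_trans IH Hc.
have Hzp k : reach (init P) sg (z ++ pw k) by exact: reach_trans Hz (Hpw k).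
pose w i := z ++ pw (i./2) ++ x ++ (if odd i then p ++ y else [::]).
have accAe i : ~~ odd i -> accepts A (w i).
  move=> /negbTE oi; rewrite /w oi cats0 catA; apply/accepts_reach.
  exists sg1.1; split=> //; exact: reach_projA (reach_trans (Hzp _) x1).
have accBo i : odd i -> accepts B (w i).
  move=> oi; rewrite /w oi catA; apply/accepts_reach.
  exists ta1.2; split=> //; apply: (reach_projB (p := init P)).
  apply: reach_trans (Hzp _) _; apply: reach_trans x2 _.
  exact: reach_trans Hp y1.
have nAo i : odd i -> ~ accepts A (w i) by move=> oi H; apply: (dis (w i)); split=> //; exact: accBo.
have nBe i : ~~ odd i -> ~ accepts B (w i) by move=> oi H; apply: (dis (w i)); split=> //; exact: accAe.
exists w; split; first by rewrite accAe.
move=> i; split.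
- case oi: (odd i).
    have h2 : i.+1./2 = (i./2).+1 by rewrite -[i.+1./2]/(uphalf i) uphalf_half oi.
    have -> : w i.+1 = z ++ (pw (i./2) ++ c) ++ x ++ [::].
      by rewrite /w h2 /= oi.
    have -> : w i = z ++ pw (i./2) ++ x ++ p ++ y by rewrite /w oi.
    rewrite /c cats0 -!catA.
    have -> : z ++ pw (i./2) ++ x ++ p ++ y ++ r ++ x = (z ++ pw (i./2) ++ x ++ p ++ y) ++ (r ++ x)
      by rewrite -!catA.
    exact: prefix_prefix.
  have h2 : i.+1./2 = i./2 by rewrite -[i.+1./2]/(uphalf i) uphalf_half oi.
  have -> : w i.+1 = z ++ pw (i./2) ++ x ++ p ++ y by rewrite /w h2 /= oi.
  have -> : w i = z ++ pw (i./2) ++ x ++ [::] by rewrite /w oi.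
  rewrite cats0.
  have -> : z ++ pw (i./2) ++ x ++ p ++ y = (z ++ pw (i./2) ++ x) ++ (p ++ y)
    by rewrite -!catA.
  exact: prefix_prefix.
- case oi: (odd i) => H; first by case: (nAo i oi).
  by apply: accBo; rewrite /= oi.
- case oi: (odd i) => H; last by case: (nBe i (negbT oi)).
  by apply: accAe; rewrite /= oi.
Qed.

End F.
Set Implicit Arguments. Unset Strict Implicit. Unset Printing Implicit Defensive.

Lemma fin_bound (T : finType) (Q : T -> nat -> Prop) :
  (forall c, exists k, ~ Q c k) ->
  forall s : seq T, exists K, forall c, c \in s -> exists k, k <= K /\ ~ Q c k.
Proof.
move=> H; elim=> [|a s [K HK]]; first by exists 0.
have [k Hk] := H a; exists (maxn k K) => c; rewrite inE => /orP[/eqP->|cs].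
  by exists k; rewrite leq_maxl.
have [k' [k'K Hk']] := HK c cs; exists k'; split=> //.
exact: leq_trans k'K (leq_maxr _ _).
Qed.

Lemma fin_konig (T : finType) (Q : T -> nat -> Prop) :
  (forall c k k', k <= k' -> Q c k' -> Q c k) ->
  (forall K, exists c, Q c K) -> exists c, forall k, Q c k.
Proof.
move=> anti ex; apply: NNPP => nH.
have H : forall c, exists k, ~ Q c k.
  move=> c; apply: not_all_ex_not => Hc; apply: nH; by exists c.
have [K HK] := fin_bound H (enum T).
have [c Hc] := ex K; have [k [kK nk]] := HK c (mem_enum _ c).
by apply: nk; apply: anti kK Hc.
Qed.

Lemma noninc_stable (f : nat -> nat) : (forall j, f j.+1 <= f j) ->
  exists N, forall k, f (N + k) = f N.
Proof.
suff: forall m g, (forall j, g j.+1 <= g j) -> g 0 <= m ->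
  exists N, forall k, g (N + k) = g N by move=> H Hf; exact: H _ f Hf (leqnn _).
elim=> [|m IH] g gm g0.
all: have glem : forall i k, g (i + k) <= g i by
  move=> i; elim=> [|k IHk]; [rewrite addn0| rewrite addnS; exact: leq_trans (gm _) IHk].
all: case: (classic (forall k, g k = g 0)) => [Hall|]; first by exists 0 => k; rewrite add0n Hall.
all: move=> /not_all_ex_not [k Hk].
all: have lt : g k < g 0 by rewrite ltn_neqAle; apply/andP; split; [apply/eqP|exact: (glem 0 k)].
  by move: g0; rewrite leqn0 => /eqP e; rewrite e in lt.
have gm' : forall j, g (k + j.+1) <= g (k + j) by move=> j; rewrite addnS; exact: gm.
have gk : g (k + 0) <= m by rewrite addn0 -ltnS; exact: leq_trans lt g0.
have [N HN] := IH (fun i => g (k + i)) gm' gk.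
by exists (k + N) => k'; rewrite -addnA HN.
Qed.

Section Bk.
Variable Sigma : finType.
Variables A B : nfa Sigma.
Notation P := (prod_nfa A B).
Hypothesis dis : forall w : seq Sigma, ~ (accepts A w /\ accepts B w).
Variable w : nat -> seq Sigma.
Hypothesis hw0 : accepts A (w 0) || accepts B (w 0).
Hypothesis hstep : forall i, [/\ prefix (w i) (w i.+1),
                  accepts A (w i) -> accepts B (w i.+1) &
                  accepts B (w i) -> accepts A (w i.+1)].

Definition u j k := drop (size (w j)) (w k).

Lemma pref j k : j <= k -> prefix (w j) (w k).
Proof.
move=> /subnKC <-; elim: (k - j) => [|m IH]; first by rewrite addn0 prefix_refl.
rewrite addnS; apply: prefix_trans IH _; by case: (hstep (j + m)).
Qed.

Lemma wsplit j k : j <= k -> w k = w j ++ u j k.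
Proof. by rewrite /u => /pref /prefixP [s ->]; rewrite drop_size_cat. Qed.

Lemma usplit j k l : j <= k -> k <= l -> u j l = u j k ++ u k l.
Proof.
move=> jk kl; rewrite [u j l]/u (wsplit kl) (wsplit jk) -catA.
by rewrite drop_size_cat.
Qed.

Lemma uself j : u j j = [::].
Proof. by rewrite /u drop_size. Qed.

Lemma accAB i : accepts A (w i) || accepts B (w i).
Proof.
elim: i => // i /orP[H|H]; case: (hstep i) => _ h1 h2.
  by rewrite (h1 H) orbT.
by rewrite (h2 H).
Qed.

Lemma nearA j : exists i, j <= i /\ accepts A (w i).
Proof.
case/orP: (accAB j) => H; first by exists j.
by exists j.+1; split => //; case: (hstep j) => _ _ ->.
Qed.

Lemma nearB j : exists i, j <= i /\ accepts B (w i).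
Proof.
case/orP: (accAB j) => H; last by exists j.
by exists j.+1; split => //; case: (hstep j) => _ ->.
Qed.

Definition witA j (a : state A) := exists i f, [/\ j <= i, f \in final A & reach a f (u j i)].
Definition witB j (b : state B) := exists i f, [/\ j <= i, f \in final B & reach b f (u j i)].
Definition G j (c : state P) := [/\ reach (init P) c (w j), witA j c.1 & witB j c.2].
Definition ext j k c := exists d, G k d /\ reach c d (u j k).

Lemma Gpred j k c d : j <= k -> reach (init P) c (w j) -> reach c d (u j k) -> G k d -> G j c.
Proof.
move=> jk Hc Hcd [_ [i [f [ki ff Hf]]] [i' [f' [ki' ff' Hf']]]].
move: Hcd; rewrite reach_prod => /andP[H1 H2].
split=> //.
  exists i, f; split=> //; first exact: leq_trans ki.
  by rewrite (usplit jk ki); exact: reach_trans H1 Hf.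
exists i', f'; split=> //; first exact: leq_trans ki'.
by rewrite (usplit jk ki'); exact: reach_trans H2 Hf'.
Qed.

Lemma Gne j : exists c, G j c.
Proof.
have [i [ji /accepts_reach [f [ff Hf]]]] := nearA j.
have [i' [ji' /accepts_reach [f' [ff' Hf']]]] := nearB j.
move: Hf; rewrite (wsplit ji) => /reach_cat [a [Ha1 Ha2]].
move: Hf'; rewrite (wsplit ji') => /reach_cat [b [Hb1 Hb2]].
exists (a, b); split.
- by rewrite reach_prod /= Ha1 Hb1.
- by exists i, f.
- by exists i', f'.
Qed.

Lemma ext_anti j k k' c : G j c -> j <= k -> k <= k' -> ext j k' c -> ext j k c.
Proof.
move=> [Hc _ _] jk kk' [d [Gd]]; rewrite (usplit jk kk') => /reach_cat [e [He1 He2]].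
exists e; split=> //; apply: Gpred kk' _ He2 Gd.
by rewrite (wsplit jk); exact: reach_trans Hc He1.
Qed.

Definition H j c := G j c /\ forall k, ext j (j + k) c.

Lemma Hne j : exists c, H j c.
Proof.
pose Q := fun c k => G j c /\ ext j (j + k) c.
have anti : forall c k k', k <= k' -> Q c k' -> Q c k.
  move=> c k k' kk' [Gc Hc]; split=> //; apply: ext_anti Gc _ _ Hc;
    by rewrite ?leq_addr ?leq_add2l.
have ex : forall K, exists c, Q c K.
  move=> K; have [d Gd] := Gne (j + K).
  have [Hd _ _] := Gd; move: Hd; rewrite (wsplit (leq_addr K j)) => /reach_cat [c [Hc1 Hc2]].
  exists c; split; last by exists d.
  exact: Gpred (leq_addr K j) Hc1 Hc2 Gd.
have [c Hc] := fin_konig anti ex.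
by exists c; split; [case: (Hc 0)| move=> k; case: (Hc k)].
Qed.

Lemma Hstep j c : H j c -> exists c', H j.+1 c' /\ reach c c' (u j j.+1).
Proof.
move=> [[Hc _ _] Hext].
pose Q := fun c' k => [/\ reach c c' (u j j.+1), G j.+1 c' & ext j.+1 (j.+1 + k) c'].
have anti : forall c k k', k <= k' -> Q c k' -> Q c k.
  move=> c1 k k' kk' [H1 G1 E1]; split=> //; apply: ext_anti G1 _ _ E1;
    by rewrite ?leq_addr ?leq_add2l.
have ex : forall K, exists c, Q c K.
  move=> K; have [d [Gd]] := Hext K.+1.
  have jj : j <= j.+1 by [].
  have jK : j.+1 <= j + K.+1 by rewrite addnS ltnS leq_addr.
  rewrite (usplit jj jK) => /reach_cat [c1 [H1 H2]].
  have Gc1 : G j.+1 c1.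
    by apply: Gpred jK _ H2 Gd; rewrite (wsplit jj); exact: reach_trans Hc H1.
  exists c1; split=> //; exists d; split; by rewrite addSn -addnS.
have [c' Hc'] := fin_konig anti ex.
exists c'; split; last by case: (Hc' 0).
by split; [case: (Hc' 0)| move=> k; case: (Hc' k)].
Qed.

Lemma tower_pattern : has_pattern A B.
Proof.
have Hex : forall j c, exists c', H j c -> H j.+1 c' /\ reach c c' (u j j.+1).
  move=> j c; case: (classic (H j c)) => [Hc|nH]; last by exists c.
  by have [c' Hc'] := Hstep Hc; exists c'.
pose next j c := proj1_sig (constructive_indefinite_description _ (Hex j c)).
have Hnext : forall j c, H j c -> H j.+1 (next j c) /\ reach c (next j c) (u j j.+1).
  by move=> j c; rewrite /next; case: constructive_indefinite_description.
pose c0 := proj1_sig (constructive_indefinite_description _ (Hne 0)).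
have Hc0 : H 0 c0 by rewrite /c0; case: constructive_indefinite_description.
pose ch := nat_rect (fun _ => state P) c0 next.
have chS j : ch j.+1 = next j (ch j) by [].
have Hch j : H j (ch j).
  by elim: j => [|j IH] //; rewrite chS; case: (Hnext _ _ IH).
have Rch j : reach (ch j) (ch j.+1) (u j j.+1).
  by rewrite chS; case: (Hnext _ _ (Hch j)).
pose e := @trans_edge _ P.
pose f j := #|[set d | connect e (ch j) d]|.
have sub j k : j <= k -> [set d | connect e (ch k) d] \subset [set d | connect e (ch j) d].
  move=> /subnKC <-; elim: (k - j) => [|m IH]; first by rewrite addn0.
  apply: subset_trans _ IH; apply/subsetP => d; rewrite !inE addnS; apply: connect_trans.
  exact: reach_connect (Rch _).
have [N HN] : exists N, forall k, f (N + k) = f N.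
  apply: noninc_stable => j; apply: subset_leq_card; exact: sub.
have back i : N <= i -> connect e (ch i) (ch N).
  move=> Ni; have : [set d | connect e (ch i) d] == [set d | connect e (ch N) d].
    have Hf : f i = f N by rewrite -(subnKC Ni) HN.
    rewrite eqEcard sub //=; change (f N <= f i); by rewrite Hf.
  move=> /eqP E; have : ch N \in [set d | connect e (ch i) d] by rewrite E inE connect0.
  by rewrite inE.
have chainR i : N <= i -> reach (ch N) (ch i) (u N i).
  move=> /subnKC <-; elim: (i - N) => [|m IH]; first by rewrite addn0 uself reach_nil.
  rewrite addnS (usplit (leq_addr m N) (leqnSn _)); exact: reach_trans IH (Rch _).
have [[HiN HA HB] _] := Hch N.
have [i [fA [Ni fAf HfA]]] := HA.
have [i' [fB [Ni' fBf HfB]]] := HB.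
pose S := [set v | connect e (ch N) v && connect e v (ch N)].
have inS i0 : N <= i0 -> ch i0 \in S.
  move=> Ni0; rewrite inE back // andbT; exact: reach_connect (chainR _ Ni0).
have une : u N N.+1 != [::].
  apply/eqP => E; have := wsplit (leqnSn N); rewrite E cats0 => ew.
  case: (hstep N) => _ h1 h2; case/orP: (accAB N) => H0.
    by case: (@dis (w N)); split=> //; rewrite -ew; exact: h1.
  by case: (@dis (w N)); split=> //; rewrite -ew; exact: h2.
move: (Rch N) une; case: (u N N.+1) => [|a t] // /[swap] _.
rewrite reach_cons => /existsP [r /andP[rd Hr]].
have er : e (ch N) r by apply/existsP; exists a.
exists S, (ch N), (fA, (ch i).2), (ch i), (ch N), ((ch i').1, fB), (ch i'); split.
- by exists (ch N).
- exists (ch N), r; split=> //; first by rewrite -[N]addn0 inS // addn0.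
  rewrite inE connect1 //=; apply: connect_trans (reach_connect Hr) (back _ (leqnSn N)).
- by [].
- by split; rewrite ?inS.
- split.
  + exists (u N i); split; last exact: chainR.
    move: (chainR _ Ni); rewrite !reach_prod /= => /andP[_ ->]; by rewrite HfA.
  + exists (u N i'); split; last exact: chainR.
    move: (chainR _ Ni'); rewrite !reach_prod /= => /andP[-> _]; by rewrite HfB.
  + exists (ch N); split; first by rewrite inS.
    exact: reach_connect HiN.
Qed.

End Bk.

Theorem theorem18 (Sigma : finType) (A B : nfa Sigma) :
  (forall w : seq Sigma, ~ (accepts A w /\ accepts B w)) ->
  (has_pattern A B <-> infinite_tower (accepts A) (accepts B)).
Proof.
move=> dis; split; first exact: pattern_tower.
move=> [w [h0 hs]]; exact: (@tower_pattern _ A B dis w h0 hs).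
Qed.
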